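(* Let $m\ge5$ with $m\equiv1\pmod4$, let $N=3^m-1$ and $v=\frac{3^m-1}{2}+3^{(m-1)/2}-1$. Then $\gcd(v,N)=1$, and for every integer $i$ with $0\le i\le\frac{3^{(m-1)/2}-1}{4}+2$, the $3$-weight of $v(1+2i)\bmod N$ is congruent to $1$ modulo $4$ (i.e. the $3$-adic digit vector of $v(1+2i)\bmod N$ lies in $S_1(m)$).
   Context: For an integer $i$, $i\bmod N$ is the unique $s\in\{0,\dots,N-1\}$ with $N\mid i-s$. For $0\le s\le 3^m-1$ with $3$-adic expansion $s=\sum_{j=0}^{m-1}s_j3^j$, $s_j\in\{0,1,2\}$, the $3$-weight is $\mathrm{wt}_3(s)=\sum_j s_j$. $S_j(m)=\{(i_0,\dots,i_{m-1})\in\{0,1,2\}^m:\sum i_k\equiv j\pmod 4\}$. *)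

(* Defs.v *)
From mathcomp Require Import all_boot.

Definition digit3 (s j : nat) : nat := (s %/ 3 ^ j) %% 3.

Definition wt3 (m s : nat) : nat := \sum_(j < m) digit3 s j.

(* Main.v *)
Require Import Defs.
From mathcomp Require Import all_boot.
From mathcomp Require Import all_algebra zify ring.

Lemma wt3_0 a : wt3 0 a = 0.
Proof. by rewrite /wt3 big_ord0. Qed.

Lemma wt3S n a : wt3 n.+1 a = a %% 3 + wt3 n (a %/ 3).
Proof.
rewrite /wt3 big_ord_recl /digit3 expn0 divn1; congr (_ + _).
apply: eq_bigr => j _; by rewrite /= expnS divnMA.
Qed.

Lemma wt3_zero n : wt3 n 0 = 0.
Proof. by elim: n => [|n IH]; rewrite ?wt3_0 // wt3S div0n mod0n IH. Qed.

Lemma wt3_split n p a b : a < 3 ^ n ->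
  wt3 (n + p) (a + 3 ^ n * b) = wt3 n a + wt3 p b.
Proof.
elim: n a => [|n IH] a Ha.
  have -> : a = 0 by rewrite expn0 in Ha; lia.
  by rewrite wt3_0 expn0 mul1n.
rewrite addSn !wt3S.
have E1 : (a + 3 ^ n.+1 * b) %% 3 = a %% 3.
  rewrite expnS -mulnA; move: (3 ^ n * b) => X; lia.
have E2 : (a + 3 ^ n.+1 * b) %/ 3 = a %/ 3 + 3 ^ n * b.
  rewrite expnS -mulnA; move: (3 ^ n * b) => X; lia.
rewrite E1 E2 IH ?addnA //.
rewrite expnS in Ha; lia.
Qed.

Lemma wt3_compl n a : a < 3 ^ n -> wt3 n a + wt3 n (3 ^ n - 1 - a) = 2 * n.
Proof.
elim: n a => [|n IH] a Ha; first by rewrite !wt3_0.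
rewrite !wt3S.
have P : 0 < 3 ^ n by rewrite expn_gt0.
rewrite expnS in Ha *.
have E1 : (3 * 3 ^ n - 1 - a) %% 3 = 2 - a %% 3 by lia.
have E2 : (3 * 3 ^ n - 1 - a) %/ 3 = 3 ^ n - 1 - a %/ 3 by lia.
rewrite E1 E2.
have := IH (a %/ 3) ltac:(lia). lia.
Qed.

Lemma wt3_1 n : wt3 n.+1 1 = 1.
Proof. by rewrite wt3S wt3_zero. Qed.
Lemma wt3_2 n : wt3 n.+1 2 = 2.
Proof. by rewrite wt3S wt3_zero. Qed.
Lemma wt3_3 n : wt3 n.+2 3 = 1.
Proof. by rewrite wt3S /= wt3_1. Qed.
Lemma wt3_4 n : wt3 n.+2 4 = 2.
Proof. by rewrite wt3S /= wt3_1. Qed.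

Lemma wt3_compl' n a b : a + b + 1 = 3 ^ n -> wt3 n a + wt3 n b = 2 * n.
Proof.
move=> H; have Ha : a < 3 ^ n by lia.
have -> : b = 3 ^ n - 1 - a by lia.
exact: wt3_compl.
Qed.

Lemma wt3_split2 k a b c : a < 3 ^ k -> b < 3 ^ k ->
  wt3 (k + (k + 1)) (a + 3 ^ k * (b + 3 ^ k * c)) = wt3 k a + wt3 k b + wt3 1 c.
Proof.
move=> Ha Hb; rewrite wt3_split // wt3_split // addnA //.
Qed.

Theorem lemma40 (m : nat) :
  5 <= m -> m %% 4 = 1 ->
  let N := 3 ^ m - 1 in
  let v := (3 ^ m - 1) %/ 2 + 3 ^ ((m - 1) %/ 2) - 1 in
  gcdn v N = 1 /\
  (forall i : nat, i <= (3 ^ ((m - 1) %/ 2) - 1) %/ 4 + 2 ->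
     wt3 m ((v * (1 + 2 * i)) %% N) %% 4 = 1).
Proof.
move=> Hm Hm4 N v.
have [t [Ht Emt]] : exists t, 1 <= t /\ m = 4 * t + 1 by exists (m %/ 4); lia.
have Ek : (m - 1) %/ 2 = 2 * t by rewrite Emt; lia.
rewrite Ek in v *.
have Hh4 : 3 ^ (2 * t) %% 4 = 1.
  rewrite expnM; elim: (t) => [|r IHr] //.
  by rewrite expnS -modnMm IHr.
have [s Es] : exists s, 3 ^ (2 * t) = 4 * s + 1.
  exists (3 ^ (2 * t) %/ 4); move: Hh4; move: (3 ^ (2 * t)) => X; lia.
have E3m : 3 ^ m = (48 * s * s + 24 * s + 2) + 1.
  have -> : 3 ^ m = 3 * 3 ^ (2 * t) * 3 ^ (2 * t).
    by rewrite Emt -mulnA -expnD -expnS; congr (3 ^ _); lia.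
  rewrite Es; ring.
have EN : N = 48 * s * s + 24 * s + 2 by rewrite /N E3m addnK.
have EN2 : (3 ^ m - 1) %/ 2 = 24 * s * s + 12 * s + 1.
  rewrite E3m addnK.
  have -> : 48 * s * s + 24 * s + 2 = 2 * (24 * s * s + 12 * s + 1) by ring.
  by rewrite mulKn.
have Ev : v = 24 * s * s + 16 * s + 1.
  rewrite /v EN2 Es; move: (s * s) => X; lia.
have Eb : (3 ^ (2 * t) - 1) %/ 4 + 2 = s + 2.
  rewrite Es addnK mulKn //.
rewrite Eb; clearbody N v; subst N v.
split.
  set d := gcdn _ _.
  have d1 : d %| 24 * s * s + 16 * s + 1 by apply: dvdn_gcdl.
  have d2 : d %| 48 * s * s + 24 * s + 2 by apply: dvdn_gcdr.
  have d3 : d %| 24 * s * s + 8 * s + 1.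
    have := dvdn_sub d2 d1.
    by have -> : 48 * s * s + 24 * s + 2 - (24 * s * s + 16 * s + 1) = 24 * s * s + 8 * s + 1
      by move: (s * s) => X; lia.
  have d4 : d %| 8 * s.
    have := dvdn_sub d1 d3.
    by have -> : 24 * s * s + 16 * s + 1 - (24 * s * s + 8 * s + 1) = 8 * s by move: (s * s) => X; lia.
  have d5 : d %| 8 * s * (3 * s + 1) by apply: dvdn_mulr.
  have := dvdn_sub d3 d5.
  have -> : 24 * s * s + 8 * s + 1 - 8 * s * (3 * s + 1) = 1.
    have -> : 24 * s * s + 8 * s + 1 = 8 * s * (3 * s + 1) + 1 by ring.
    by rewrite addKn.
  by rewrite dvdn1 => /eqP.
move=> i Hi.
have : 1 <= s by move: Es; case: (t) Ht => // r _; rewrite expnS; lia.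
move=> Hs1.
set x := 24 * s * s + 12 * s + 1 + (2 * i + 1) * (4 * s).
have Ex : ((24 * s * s + 16 * s + 1) * (1 + 2 * i)) %% (48 * s * s + 24 * s + 2) = x.
  have -> : (24 * s * s + 16 * s + 1) * (1 + 2 * i) = i * (48 * s * s + 24 * s + 2) + x
    by rewrite /x; ring.
  rewrite modnMDl modn_small // /x.
  have : (2 * i + 1) * (4 * s) <= (2 * s + 5) * (4 * s) by apply: leq_mul => //; lia.
  move: ((2 * i + 1) * (4 * s)) => Y; nia.
rewrite Ex.
have Hmk : m = 2 * t + (2 * t + 1) by lia.
have Hk2 : 2 * t = (2 * t - 2).+2 by lia.
rewrite Hmk.
have [Hlt|Hge] := ltnP i s.
- have [c Ec] : exists c, s = i + 1 + c by exists (s - i - 1); lia.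
  have -> : x = (2 * c + 1) + 3 ^ (2 * t) * ((4 * s - 2 * c - 1) + 3 ^ (2 * t) * 1).
    have -> : 4 * s - 2 * c - 1 = 4 * i + 2 * c + 3 by lia.
    rewrite /x Es Ec; ring.
  rewrite wt3_split2; try (rewrite Es; lia).
  rewrite (wt3_compl' (2 * t) _ (4 * s - 2 * c - 1)); last by rewrite Es; lia.
  rewrite wt3_1; lia.
- have : (i = s) \/ (i = s + 1) \/ (i = s + 2) by lia.
  case=> [He|[He|He]].
  + have -> : x = (4 * s) + 3 ^ (2 * t) * ((4 * s) + 3 ^ (2 * t) * 1).
      rewrite /x Es He; ring.
    rewrite wt3_split2; try (rewrite Es; lia).
    have := wt3_compl' (2 * t) 0 (4 * s) ltac:(rewrite Es; lia).
    rewrite wt3_zero add0n => ->.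
    rewrite wt3_1; lia.
  + have [r Er] : exists r, s = r + 1 by exists (s - 1); lia.
    have -> : x = (4 * r + 2) + 3 ^ (2 * t) * (1 + 3 ^ (2 * t) * 2).
      rewrite /x Es He Er; ring.
    rewrite wt3_split2; try (rewrite Es; lia).
    have := wt3_compl' (2 * t) 2 (4 * r + 2) ltac:(rewrite Es; lia).
    rewrite Hk2 wt3_2 wt3_1 wt3_2 -Hk2 => H.
    lia.
  + have [r Er] : exists r, s = r + 1 by exists (s - 1); lia.
    have -> : x = (4 * r) + 3 ^ (2 * t) * (3 + 3 ^ (2 * t) * 2).
      rewrite /x Es He Er; ring.
    rewrite wt3_split2; try (rewrite Es; lia).
    have := wt3_compl' (2 * t) 4 (4 * r) ltac:(rewrite Es; lia).
    rewrite Hk2 wt3_4 wt3_3 wt3_2 -Hk2 => H.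
    lia.
Qed.
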